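(* Let $Q$ be a convex quadrilateral with vertices $0,1,z,w$ in counterclockwise order, and let $X\in(0,\infty)$. Then the equation $$-\frac{(1-u)(w-u)}{(0-u)(z-u)}=X$$ in the unknown $u\in\mathbb{C}$ has two solutions counted with multiplicity, and both lie in the interior of $Q$. *)

(* Defs.v *)
(* The complex plane is modelled by an arbitrary
   numClosedFieldType C (e.g. algC); the statement is purely algebraic. *)
From HB Require Import structures.
From mathcomp Require Import all_boot all_order all_algebra.
Set Implicit Arguments. Unset Strict Implicit. Unset Printing Implicit Defensive.
Import Order.TTheory GRing.Theory Num.Theory.
Local Open Scope ring_scope.

(* Strict left turn: c lies strictly to the left of the oriented line a -> b,
   i.e. cross(b - a, c - a) = Im(conj(b - a) * (c - a)) > 0. *)
Definition left_of (C : numClosedFieldType) (a b c : C) : bool :=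
  0 < 'Im ((b - a)^* * (c - a)).

Definition convex_ccw_quad (C : numClosedFieldType) (a b c d : C) : bool :=
  [&& left_of a b c, left_of b c d, left_of c d a & left_of d a b].

Definition in_quad_interior (C : numClosedFieldType) (a b c d u : C) : bool :=
  [&& left_of a b u, left_of b c u, left_of c d u & left_of d a u].

Definition cross_ratio_lhs (C : numClosedFieldType) (z w u : C) : C :=
  - ((1 - u) * (w - u)) / ((0 - u) * (z - u)).

(* Numerator polynomial of  lhs(u) - X, obtained by clearing the
   denominator (0-u)(z-u); solutions "counted with multiplicity" are its roots. *)
Definition quad_eq_poly (C : numClosedFieldType) (z w X : C) : {poly C} :=
  - ((1 - 'X) * (w%:P - 'X)) - X%:P * ((0 - 'X) * (z%:P - 'X)).

(* Main.v *)
Require Import Defs.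

From HB Require Import structures.
From mathcomp Require Import all_boot all_order all_algebra.
From mathcomp Require Import ring.
Set Implicit Arguments. Unset Strict Implicit. Unset Printing Implicit Defensive.
Import Order.TTheory GRing.Theory Num.Theory.
Local Open Scope ring_scope.
Lemma npos3 (R : numDomainType) (p q r x y z : R) :
  0 <= p -> x <= 0 -> 0 <= q -> y <= 0 -> 0 <= r -> z <= 0 ->
  p * x + q * y + r * z <= 0.
Proof.
move=> hp hx hq hy hr hz.
apply: (le_trans (lerD (lerD (mulr_ge0_le0 hp hx) (mulr_ge0_le0 hq hy))
                       (mulr_ge0_le0 hr hz))).
by rewrite !addr0.
Qed.

Lemma contra_pos (R : numDomainType) (l k : R) : l <= 0 -> l = k -> 0 < k -> False.
Proof. by move=> hl <- hk; move: (lt_le_trans hk hl); rewrite ltxx. Qed.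

Lemma core (R : numDomainType) (a b c d x y t s : R) :
  a \is Num.real -> b \is Num.real -> c \is Num.real -> d \is Num.real ->
  x \is Num.real -> y \is Num.real ->
  0 < b -> 0 < d -> 0 < a * d - b * c -> 0 < (a - 1) * d - b * (c - 1) ->
  0 < t -> 0 < s ->
  y = t * ((c - a) * (y - b) - (d - b) * (x - a)) ->
  (a - 1) * y - b * (x - 1) = s * (d * x - c * y) ->
  [/\ 0 < y, 0 < (a - 1) * y - b * (x - 1),
      0 < (c - a) * (y - b) - (d - b) * (x - a) & 0 < d * x - c * y].
Proof.
move=> ra rb rc rd rx ry hb hd h3 h4 ht hs hA hB.
set A := y in hA *. set B := (a - 1) * y - b * (x - 1) in hB *.
set Cc := (c - a) * (y - b) - (d - b) * (x - a) in hA *.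
set D := d * x - c * y in hB *.
have rB : B \is Num.real by rewrite /B; rewrite ?(rpredB, rpredM, rpred1).
have rCc : Cc \is Num.real by rewrite /Cc; rewrite ?(rpredB, rpredM, rpred1).
have rD : D \is Num.real by rewrite /D; rewrite ?(rpredB, rpredM, rpred1).
have sum : A + B + Cc + D = b + (a * d - b * c) by rewrite /A /B /Cc /D; ring.
have sumpos : 0 < b + (a * d - b * c) by rewrite addr_gt0.
have Apos : 0 < A.
  case: (real_leP ry (rpred0 _)) => // Ale0.
  have Cle0 : Cc <= 0 by rewrite -(pmulr_rle0 _ ht) -hA.
  exfalso.
  case: (real_leP rB (rpred0 _)) => Bs.
  - have Dle0 : D <= 0 by rewrite -(pmulr_rle0 _ hs) -hB.
    apply: (contra_pos _ sum sumpos).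
    apply: (le_trans (lerD (lerD (lerD Ale0 Bs) Cle0) Dle0)).
    by rewrite !addr0.
  - have Dpos : 0 < D by rewrite -(pmulr_rgt0 _ hs) -hB.
    case: (real_leP rb rd) => hbd.
    + apply: (contra_pos (k := b * ((a - 1) * d - b * (c - 1)))
                (npos3 (r := d - b) (z := - B) (ltW h4) Ale0 (ltW hb) Cle0 _ _)); last by rewrite mulr_gt0.
      * by rewrite subr_ge0.
      * by rewrite oppr_le0 ltW.
      * by rewrite /A /B /Cc /D; ring.
    + apply: (contra_pos (k := d * (a * d - b * c))
                (npos3 (r := b - d) (z := - D) (ltW h3) Ale0 (ltW hd) Cle0 _ _)); last by rewrite mulr_gt0.
      * by rewrite subr_ge0 ltW.
      * by rewrite oppr_le0 ltW.
      * by rewrite /A /B /Cc /D; ring.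
have Cpos : 0 < Cc by rewrite -(pmulr_rgt0 _ ht) -hA.
have Bpos : 0 < B.
  case: (real_leP rB (rpred0 _)) => // Ble0.
  have Dle0 : D <= 0 by rewrite -(pmulr_rle0 _ hs) -hB.
  exfalso.
  have rE : a * d - b * c - d \is Num.real by rewrite ?(rpredB, rpredM).
  case: (real_leP (rpred0 _) rE) => hE.
  - apply: (contra_pos (k := b * d)
              (npos3 (z := - A) (ltW hd) Ble0 (ltW hb) Dle0 hE _)); last by rewrite mulr_gt0.
    + by rewrite oppr_le0 ltW.
    + by rewrite /A /B /Cc /D; ring.
  - apply: (contra_pos (k := (a * d - b * c) * ((a - 1) * d - b * (c - 1)))
              (npos3 (r := - (a * d - b * c - d)) (z := - Cc) (ltW h3) Ble0 (ltW h4) Dle0 _ _)); last by rewrite mulr_gt0.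
    + by rewrite oppr_ge0 ltW.
    + by rewrite oppr_le0 ltW.
    + by rewrite /A /B /Cc /D; ring.
have Dpos : 0 < D by rewrite -(pmulr_rgt0 _ hs) -hB.
by split.
Qed.

Section Cplx.
Variable C : numClosedFieldType.
Implicit Types (p q u v : C).

Lemma crossE p q : 'Im (p^* * q) = 'Re p * 'Im q - 'Im p * 'Re q.
Proof. by rewrite ImM Re_conj Im_conj; ring. Qed.

Lemma re1 : 'Re (1 : C) = 1.
Proof. by apply/Creal_ReP; rewrite rpred1. Qed.
Lemma im1 : 'Im (1 : C) = 0.
Proof. by apply/Creal_ImP; rewrite rpred1. Qed.
Lemma re0 : 'Re (0 : C) = 0.
Proof. exact: raddf0. Qed.
Lemma im0 : 'Im (0 : C) = 0.
Proof. exact: raddf0. Qed.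

Lemma reB p q : 'Re (p - q) = 'Re p - 'Re q. Proof. exact: raddfB. Qed.
Lemma imB p q : 'Im (p - q) = 'Im p - 'Im q. Proof. exact: raddfB. Qed.

Lemma leftE p q u : left_of p q u =
  (0 < ('Re q - 'Re p) * ('Im u - 'Im p) - ('Im q - 'Im p) * ('Re u - 'Re p)).
Proof. by rewrite /left_of crossE !reB !imB. Qed.

Lemma imrel (al be K : C) : 0 < K -> be != 0 -> al * be = - K ->
  'Im al = (K / `|be| ^+ 2) * 'Im be.
Proof.
move=> K0 b0 h.
have -> : al = - K / be by rewrite -h mulfK.
rewrite ImMl ?rpredN ?gtr0_real // ImV.
ring.
Qed.

Lemma pos_eq (x y : C) : 0 < x -> x = y -> 0 < y.
Proof. by move=> h <-. Qed.

Lemma quad_factor (a b c : C) : a != 0 ->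
  exists r1 r2 : C,
    a%:P * 'X^2 + b%:P * 'X + c%:P = a *: (('X - r1%:P) * ('X - r2%:P)).
Proof.
move=> a0.
have h2 : (2 : C) != 0 by rewrite pnatr_eq0.
have h4 : (4 : C) != 0 by rewrite pnatr_eq0.
set s := sqrtC (b ^+ 2 - 4 * a * c).
have hs : s ^+ 2 = b ^+ 2 - 4 * a * c by exact: sqrtCK.
set r1 := (- b - s) / (2 * a). set r2 := (- b + s) / (2 * a).
have e1 : b = - a * (r1 + r2) by rewrite /r1 /r2; field.
have e2 : c = a * (r1 * r2).
  rewrite /r1 /r2 [RHS](_ : _ = (b ^+ 2 - s ^+ 2) / (4 * a)); last by field.
  by rewrite hs; field.
exists r1, r2.
clearbody r1 r2; rewrite e1 e2 -mul_polyC.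
rewrite !(polyCM, polyCN, polyCD).
ring.
Qed.

End Cplx.

Lemma interior (C : numClosedFieldType) (z w X u : C) : 0 < X ->
  0 < 'Im z -> 0 < 'Im w -> 0 < 'Re z * 'Im w - 'Im z * 'Re w ->
  0 < ('Re z - 1) * 'Im w - 'Im z * ('Re w - 1) ->
  u != 0 -> u != z -> u != w ->
  (u - 1) * (u - w) = - (X * (u * (u - z))) ->
  in_quad_interior 0 1 z w u.
Proof.
move=> X0 hb hd h3 h4 u0 uz uw E.
pose K := X * (`|u| ^+ 2 * `|u - z| ^+ 2).
have K0 : 0 < K.
  rewrite /K mulr_gt0 // mulr_gt0 // exprn_gt0 // normr_gt0 ?subr_eq0 //.
have hab : (u^* * (u - 1)) * ((u - z)^* * (u - w)) = - K.
  rewrite /K !normCK.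
  transitivity ((u - 1) * (u - w) * (u^* * (u - z)^*)); first ring.
  by rewrite E; ring.
have hgd : ((u - z)^* * (u - 1)) * (u^* * (u - w)) = - K by rewrite -hab; ring.
have nb : (u - z)^* * (u - w) != 0 by rewrite mulf_neq0 ?conjC_eq0 ?subr_eq0.
have nd : u^* * (u - w) != 0 by rewrite mulf_neq0 ?conjC_eq0 ?subr_eq0.
have tpos : 0 < K / `|(u - z)^* * (u - w)| ^+ 2
  by rewrite divr_gt0 // exprn_gt0 // normr_gt0.
have spos : 0 < K / `|u^* * (u - w)| ^+ 2
  by rewrite divr_gt0 // exprn_gt0 // normr_gt0.
have ht := imrel K0 nb hab.
have hs := imrel K0 nd hgd.
move: ht hs tpos spos.
rewrite !crossE !reB !imB re1 im1.
move: (K / _) (K / _) => s t ht hs tpos spos.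
rewrite /in_quad_interior !leftE !(re0, im0, re1, im1).
move: ht hs hb hd h3 h4.
move: (Creal_Re z) (Creal_Im z) (Creal_Re w) (Creal_Im w) (Creal_Re u) (Creal_Im u).
move: ('Re z) ('Im z) ('Re w) ('Im w) ('Re u) ('Im u).
move=> a b c d x y ra rb rc rd rx ry ht hs hb hd h3 h4.
have hA : y = t * ((c - a) * (y - b) - (d - b) * (x - a)).
  transitivity (x * (y - 0) - y * (x - 1)); first ring.
  by rewrite ht; congr (_ * _); ring.
have hB : (a - 1) * y - b * (x - 1) = s * (d * x - c * y).
  transitivity (- ((x - a) * (y - 0) - (y - b) * (x - 1))); first ring.
  by rewrite hs; ring.
have h4' : 0 < (a - 1) * d - b * (c - 1) by apply: (pos_eq h4); ring.
have [cA cB cC cD] := core ra rb rc rd rx ry hb hd h3 h4' tpos spos hA hB.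
apply/and4P; split.
- by apply: (pos_eq cA); ring.
- by apply: (pos_eq cB); ring.
- by apply: (pos_eq cC); ring.
- by apply: (pos_eq cD); ring.
Qed.

Unset Implicit Arguments.

Theorem mainTheorem2 (C : numClosedFieldType) (z w X : C) :
  convex_ccw_quad 0 1 z w -> 0 < X ->
  exists u1 u2 : C,
    [/\ exists2 c : C, c != 0 & quad_eq_poly z w X = c *: (('X - u1%:P) * ('X - u2%:P)),
        (forall u : C, ((0 - u) * (z - u) != 0 /\ cross_ratio_lhs z w u = X)
                        <-> (u = u1 \/ u = u2)),
        in_quad_interior 0 1 z w u1
      & in_quad_interior 0 1 z w u2].
Proof.
move=> hq X0.
move: hq; rewrite /convex_ccw_quad !leftE !(re0, im0, re1, im1) => /and4P [h1 h2 h3 h4].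
have hb : 0 < 'Im z by apply: (pos_eq h1); ring.
have h4' : 0 < ('Re z - 1) * 'Im w - 'Im z * ('Re w - 1) by apply: (pos_eq h2); ring.
have h3' : 0 < 'Re z * 'Im w - 'Im z * 'Re w by apply: (pos_eq h3); ring.
have hd : 0 < 'Im w by apply: (pos_eq h4); ring.
have wn0 : w != 0 by apply/eqP => e; move: hd; rewrite e im0 ltxx.
have z1 : z != 1 by apply/eqP => e; move: hb; rewrite e im1 ltxx.
have zw : z != w.
  by apply/eqP => e; move: h3'; rewrite e (mulrC ('Im w)) subrr ltxx.
pose a0 := - (1 + X).
have a0n : a0 != 0.
  by rewrite /a0 oppr_eq0 gt_eqF // addr_gt0 // ltr01.
have qE : quad_eq_poly z w X = a0%:P * 'X^2 + (1 + w + X * z)%:P * 'X + (- w)%:P.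
  by rewrite /quad_eq_poly /a0 !(polyCD, polyCN, polyCM, polyC1); ring.
have peval u : (quad_eq_poly z w X).[u] = - ((1 - u) * (w - u)) - X * ((0 - u) * (z - u)).
  by rewrite /quad_eq_poly !hornerE; ring.
have [r1 [r2 hf]] := @quad_factor C a0 (1 + w + X * z) (- w) a0n.
have hroot u : (quad_eq_poly z w X).[u] = 0 <-> (u = r1 \/ u = r2).
  rewrite qE hf hornerZ hornerM !hornerXsubC; split.
  - move/eqP; rewrite mulf_eq0 (negbTE a0n) /= mulf_eq0 !subr_eq0.
    by case/orP => /eqP; [left | right].
  - by case=> ->; rewrite subrr ?mul0r ?mulr0.
have rootN u : (quad_eq_poly z w X).[u] = 0 ->
    - ((1 - u) * (w - u)) = X * ((0 - u) * (z - u)).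
  by rewrite peval => /eqP; rewrite subr_eq0 => /eqP.
have rootP u : (quad_eq_poly z w X).[u] = 0 -> [/\ u != 0, u != z & u != w].
  move=> /rootN hN; split.
  - apply/eqP => e; apply/(negP wn0)/eqP; move: hN; rewrite e => h.
    transitivity (- (- ((1 - 0) * (w - 0)))); first ring.
    by rewrite h; ring.
  - apply/eqP => e; move: hN; rewrite e => h.
    have : (1 - z) * (w - z) = 0.
      transitivity (- (- ((1 - z) * (w - z)))); first ring.
      by rewrite h; ring.
    move/eqP; rewrite mulf_eq0 !subr_eq0 => /orP [/eqP e1 | /eqP e2].
    + by move: z1; rewrite e1 eqxx.
    + by move: zw; rewrite e2 eqxx.
  - apply/eqP => e; move: hN; rewrite e => h.
    have : X * (w * (w - z)) = 0.
      transitivity (X * ((0 - w) * (z - w))); first ring.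
      by rewrite -h; ring.
    move/eqP; rewrite !mulf_eq0 subr_eq0 (negbTE wn0) (gt_eqF X0) /= => /eqP e2.
    by move: zw; rewrite e2 eqxx.
have interior_root u : (quad_eq_poly z w X).[u] = 0 -> in_quad_interior 0 1 z w u.
  move=> hp; have [u0 uz uw] := rootP u hp.
  have hN := rootN u hp.
  apply: (interior X0 hb hd h3' h4' u0 uz uw).
  transitivity (- (- ((1 - u) * (w - u)))); first ring.
  by rewrite hN; ring.
exists r1, r2; split.
- by exists a0 => //; rewrite qE hf.
- move=> u; rewrite -hroot; split.
  + case=> hD; rewrite /cross_ratio_lhs => hl.
    rewrite peval; apply/eqP; rewrite subr_eq0; apply/eqP.
    by rewrite -hl divfK.
  + move=> hp; have [u0 uz uw] := rootP u hp.
    have hD : (0 - u) * (z - u) != 0.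
      by rewrite mulf_neq0 // subr_eq0 // eq_sym.
    split => //; rewrite /cross_ratio_lhs rootN // mulfK //.
- by apply: interior_root; apply/hroot; left.
- by apply: interior_root; apply/hroot; right.
Qed.
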